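(* Let $A$ be a $p\times p$ positive-semidefinite matrix. If $K_1(A)/K_2(A)\to0$ as $m\to\infty$, then $K_1(A)/\{\Delta(A)\}^2\to0$ as $m\to\infty$.
   Context: Two populations on $\mathbb{R}^p$ have mean vectors $\mu_1,\mu_2$ and positive-definite covariance matrices $\Sigma_1,\Sigma_2$; sample sizes $n_1,n_2\ge4$. Let $\mu_A=A^{1/2}(\mu_1-\mu_2)$, $\Sigma_{i,A}=A^{1/2}\Sigma_iA^{1/2}$, $\Delta(A)=\|\mu_A\|^2$, $K_1(A)=2\sum_{i=1}^2\mathrm{tr}(\Sigma_{i,A}^2)/\{n_i(n_i-1)\}+4\mathrm{tr}(\Sigma_{1,A}\Sigma_{2,A})/(n_1n_2)$, $K_2(A)=4\sum_{i=1}^2\mu_A^T\Sigma_{i,A}\mu_A/n_i$. All quantities may depend on $p,n_1,n_2$; $m=\min\{p,\min(n_1,n_2)\}$. *)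

(* Defs.v *)
From HB Require Import structures.
From mathcomp Require Import all_boot all_order all_algebra.
From mathcomp Require Import all_classical all_reals all_analysis.
Set Implicit Arguments. Unset Strict Implicit. Unset Printing Implicit Defensive.
Import Order.TTheory GRing.Theory Num.Theory.
Local Open Scope ring_scope.

Section Defs.
Variable R : realType.

Definition psd (n : nat) (M : 'M[R]_n) : Prop :=
  M^T = M /\ forall x : 'cV[R]_n, 0 <= (x^T *m M *m x) ord0 ord0.

Definition pd (n : nat) (M : 'M[R]_n) : Prop :=
  M^T = M /\ forall x : 'cV[R]_n, x != 0 -> 0 < (x^T *m M *m x) ord0 ord0.

(* B plays the role of A^{1/2}: the (unique) PSD matrix with B B = A *)
Definition muA (n : nat) (B : 'M[R]_n) (mu1 mu2 : 'cV[R]_n) : 'cV[R]_n :=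
  B *m (mu1 - mu2).

Definition SigA (n : nat) (B S : 'M[R]_n) : 'M[R]_n := B *m S *m B.

Definition Delta (n : nat) (B : 'M[R]_n) (mu1 mu2 : 'cV[R]_n) : R :=
  ((muA B mu1 mu2)^T *m muA B mu1 mu2) ord0 ord0.

Definition K1 (n : nat) (n1 n2 : nat) (B S1 S2 : 'M[R]_n) : R :=
  2 * (\tr (SigA B S1 *m SigA B S1) / (n1%:R * (n1%:R - 1))
       + \tr (SigA B S2 *m SigA B S2) / (n2%:R * (n2%:R - 1)))
  + 4 * \tr (SigA B S1 *m SigA B S2) / (n1%:R * n2%:R).

Definition K2 (n : nat) (n1 n2 : nat) (B S1 S2 : 'M[R]_n) (mu1 mu2 : 'cV[R]_n) : R :=
  4 * (((muA B mu1 mu2)^T *m SigA B S1 *m muA B mu1 mu2) ord0 ord0 / n1%:R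
       + ((muA B mu1 mu2)^T *m SigA B S2 *m muA B mu1 mu2) ord0 ord0 / n2%:R).

End Defs.

(* Main.v *)
Require Import Defs.
From HB Require Import structures.
From mathcomp Require Import all_boot all_order all_algebra.
From mathcomp Require Import all_classical all_reals all_analysis.
From mathcomp Require Import ring lra.
Import Order.TTheory GRing.Theory Num.Theory numFieldNormedType.Exports.
Local Open Scope classical_set_scope.
Local Open Scope ring_scope.

Section Aux.
Variable R : realType.

Lemma cs_sum n (a b : 'I_n -> R) :
  (\sum_i a i * b i) ^+ 2 <= (\sum_i a i ^+ 2) * (\sum_i b i ^+ 2).
Proof.
have H : 0 <= \sum_i \sum_j (a i * b j - a j * b i) ^+ 2.
  by apply: sumr_ge0 => i _; apply: sumr_ge0 => j _; exact: sqr_ge0.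
have E : \sum_i \sum_j (a i * b j - a j * b i) ^+ 2 =
   2 * ((\sum_i a i ^+ 2) * (\sum_i b i ^+ 2) - (\sum_i a i * b i) ^+ 2).
  have E1 : forall i j, (a i * b j - a j * b i) ^+ 2 =
     a i ^+ 2 * b j ^+ 2 + a j ^+ 2 * b i ^+ 2 - 2 * ((a i * b i) * (a j * b j)).
    by move=> i j; ring.
  under eq_bigr do under eq_bigr do rewrite E1.
  under eq_bigr do rewrite sumrB big_split /=.
  rewrite sumrB big_split /=.
  rewrite [X in _ + X - _]exchange_big /=.
  have -> : \sum_i \sum_j a i ^+ 2 * b j ^+ 2 = (\sum_i a i ^+ 2) * (\sum_i b i ^+ 2).
    by rewrite mulr_suml; apply: eq_bigr => i _; rewrite mulr_sumr.
  have -> : \sum_i \sum_j 2 * (a i * b i * (a j * b j)) = 2 * (\sum_i a i * b i) ^+ 2.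
    rewrite expr2 mulr_suml mulr_sumr; apply: eq_bigr => i _.
    rewrite mulr_sumr mulr_sumr; apply: eq_bigr => j _; ring.
  ring.
rewrite E in H; rewrite -subr_ge0; move: H; rewrite pmulr_rge0 //.
Qed.


Lemma qformE n (x : 'cV[R]_n) (M : 'M[R]_n) :
  (x^T *m M *m x) ord0 ord0 = \sum_i x i ord0 * \sum_j M i j * x j ord0.
Proof.
rewrite -mulmxA mxE; apply: eq_bigr => i _; rewrite !mxE.  by [].
Qed.

Lemma dotE n (x : 'cV[R]_n) : (x^T *m x) ord0 ord0 = \sum_i x i ord0 ^+ 2.
Proof. by rewrite mxE; apply: eq_bigr => i _; rewrite mxE expr2. Qed.

Lemma dot_ge0 n (x : 'cV[R]_n) : 0 <= (x^T *m x) ord0 ord0.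
Proof. by rewrite dotE; apply: sumr_ge0 => i _; exact: sqr_ge0. Qed.

Lemma trsymE n (M : 'M[R]_n) : M^T = M ->
  \tr (M *m M) = \sum_i \sum_j M i j ^+ 2.
Proof.
move=> HM; have Mji : forall i j, M j i = M i j by move=> i j; rewrite -{1}HM mxE.
apply: eq_bigr => i _; rewrite mxE; apply: eq_bigr => j _; by rewrite Mji expr2.
Qed.

Lemma trsym_ge0 n (M : 'M[R]_n) : M^T = M -> 0 <= \tr (M *m M).
Proof.
move=> /trsymE ->; apply: sumr_ge0 => i _; apply: sumr_ge0 => j _; exact: sqr_ge0.
Qed.

Lemma qform_sq n (M : 'M[R]_n) (x : 'cV[R]_n) : M^T = M ->
  ((x^T *m M *m x) ord0 ord0) ^+ 2 <= ((x^T *m x) ord0 ord0) ^+ 2 * \tr (M *m M).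
Proof.
move=> HM; rewrite qformE dotE trsymE //.
set X := \sum_i x i ord0 ^+ 2.
have X0 : 0 <= X by apply: sumr_ge0 => i _; exact: sqr_ge0.
apply: le_trans (cs_sum _ (fun i => x i ord0) (fun i => \sum_j M i j * x j ord0)) _; rewrite -/X expr2 -mulrA ler_wpM2l //. rewrite mulrC.
have -> : (\sum_i \sum_j M i j ^+ 2) * X = \sum_i ((\sum_j M i j ^+ 2) * X).
  by rewrite mulr_suml.
apply: ler_sum => i _; exact: (cs_sum _ (fun j => M i j) (fun j => x j ord0)).
Qed.


Lemma final_ineq (K1 K2 D t q : R) : 0 <= t -> 2 * t <= K1 -> K2 = 4 * q ->
  q ^+ 2 <= D ^+ 2 * t -> (D != 0 -> K2 != 0) ->
  0 <= K1 / D ^+ 2 <= 8 * (K1 / K2) ^+ 2.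
Proof.
move=> t0 tK K2q qD DK.
have K10 : 0 <= K1 by apply: le_trans tK; rewrite mulr_ge0.
have [->|D0] := eqVneq D 0.
  by rewrite expr0n /= invr0 mulr0 lexx /= mulr_ge0 // sqr_ge0.
have K20 := DK D0.
have D2 : 0 < D ^+ 2 by rewrite lt0r sqrf_eq0 D0 sqr_ge0.
have K22 : 0 < K2 ^+ 2 by rewrite lt0r sqrf_eq0 K20 sqr_ge0.
apply/andP; split; first by rewrite divr_ge0 // ltW.
rewrite ler_pdivrMr //.
have -> : 8 * (K1 / K2) ^+ 2 * D ^+ 2 = (8 * K1 ^+ 2 * D ^+ 2) / K2 ^+ 2.
  by rewrite expr_div_n; field.
rewrite ler_pdivlMr //.
have H : K2 ^+ 2 <= 8 * D ^+ 2 * K1.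
  rewrite K2q; nra.
nra.
Qed.


Lemma qform_lin n (x : 'cV[R]_n) (a b : R) (M N : 'M[R]_n) :
  (x^T *m (a *: M + b *: N) *m x) ord0 ord0 =
  a * (x^T *m M *m x) ord0 ord0 + b * (x^T *m N *m x) ord0 ord0.
Proof.
by rewrite mulmxDr mulmxDl -!scalemxAr -!scalemxAl !mxE.
Qed.

Lemma sig_sym n (B S : 'M[R]_n) : B^T = B -> S^T = S -> (SigA B S)^T = SigA B S.
Proof. by move=> HB HS; rewrite /SigA !trmx_mul HB HS mulmxA. Qed.

Lemma per_k n (n1 n2 : nat) (B S1 S2 : 'M[R]_n) (mu1 mu2 : 'cV[R]_n) :
  (4 <= n1)%N -> (4 <= n2)%N -> pd S1 -> pd S2 -> psd B ->
  0 <= K1 n1 n2 B S1 S2 / (Delta B mu1 mu2) ^+ 2 <=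
  8 * (K1 n1 n2 B S1 S2 / K2 n1 n2 B S1 S2 mu1 mu2) ^+ 2.
Proof.
move=> h1 h2 [HS1 PS1] [HS2 PS2] [HB _].
set a := (n1%:R : R)^-1; set b := (n2%:R : R)^-1.
have a0 : 0 < a by rewrite invr_gt0 ltr0n; apply: leq_trans h1.
have b0 : 0 < b by rewrite invr_gt0 ltr0n; apply: leq_trans h2.
set S1' := SigA B S1; set S2' := SigA B S2.
set T := a *: S1' + b *: S2'.
have HS1' : S1'^T = S1' by exact: sig_sym.
have HS2' : S2'^T = S2' by exact: sig_sym.
have HT : T^T = T by rewrite /T linearD /= !linearZ /= HS1' HS2'.
set mu := muA B mu1 mu2.
apply: (@final_ineq _ _ _ (\tr (T *m T)) ((mu^T *m T *m mu) ord0 ord0)).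
- exact: trsym_ge0.
- have trE : \tr (T *m T) = a * a * \tr (S1' *m S1') + a * b * \tr (S1' *m S2')
      + b * a * \tr (S1' *m S2') + b * b * \tr (S2' *m S2').
    rewrite /T mulmxDl !mulmxDr -!scalemxAl -!scalemxAr !scalerA !mxtraceD !mxtraceZ.
    by rewrite (mxtrace_mulC S2' S1') !addrA.
  have t1 := @trsym_ge0 _ _ HS1'; have t2 := @trsym_ge0 _ _ HS2'.
  have cb : forall m : nat, (4 <= m)%N -> (m%:R : R)^-1 * (m%:R)^-1 <= (m%:R * (m%:R - 1))^-1.
    move=> m hm; have x4 : (4 : R) <= m%:R by rewrite ler_nat.
    rewrite -invfM lef_pV2 ?posrE; [nra|nra|nra].
  have c1 := cb _ h1; have c2 := cb _ h2; rewrite -/a in c1; rewrite -/b in c2.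
  rewrite trE /K1 -/S1' -/S2'.
  set u := (n1%:R * (n1%:R - 1))^-1 in c1 *; set v := (n2%:R * (n2%:R - 1))^-1 in c2 *.
  rewrite invfM -/a -/b.
  nra.
- by rewrite /K2 /T qform_lin -/mu !(mulrC a) !(mulrC b).
- exact: qform_sq.
- move=> D0; rewrite /K2 -/mu.
  set w := B *m mu.
  have qE : forall S, (mu^T *m SigA B S *m mu) ord0 ord0 = (w^T *m S *m w) ord0 ord0.
    by move=> S; rewrite /SigA /w /mu /muA !trmx_mul HB !mulmxA.
  rewrite !qE.
  have [w0|wn0] := eqVneq w 0.
    move: D0; rewrite /Delta -/mu.
    have -> : mu^T *m mu = (mu1 - mu2)^T *m w.
      by rewrite /w {1}/mu /muA trmx_mul HB mulmxA.
    by rewrite w0 mulmx0 mxE eqxx.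
  have q1 := PS1 _ wn0; have q2 := PS2 _ wn0.
  rewrite gt_eqF // mulr_gt0 // addr_gt0 // divr_gt0 // ltr0n.
    exact: leq_trans h1.
  exact: leq_trans h2.
Qed.

End Aux.

Theorem proposition1 (R : realType) (p n1 n2 : nat -> nat)
  (mu1 mu2 : forall k, 'cV[R]_(p k)) (S1 S2 A B : forall k, 'M[R]_(p k)) :
  (forall k, (4 <= n1 k)%N) -> (forall k, (4 <= n2 k)%N) ->
  (forall k, pd (S1 k)) -> (forall k, pd (S2 k)) ->
  (forall k, psd (A k)) ->
  (forall k, psd (B k) /\ B k *m B k = A k) ->
  (forall M : nat, \forall k \near \oo, (M <= minn (p k) (minn (n1 k) (n2 k)))%N) ->
  (fun k => K1 (n1 k) (n2 k) (B k) (S1 k) (S2 k)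
            / K2 (n1 k) (n2 k) (B k) (S1 k) (S2 k) (mu1 k) (mu2 k)) @ \oo --> 0 ->
  (fun k => K1 (n1 k) (n2 k) (B k) (S1 k) (S2 k)
            / (Delta (B k) (mu1 k) (mu2 k)) ^+ 2) @ \oo --> 0.
Proof.
move=> h1 h2 pS1 pS2 _ hB _ Hg.
set g := (fun k => _ / K2 _ _ _ _ _ _ _) in Hg.
apply: (@squeeze_cvgr _ _ _ _ (fun _ => 0) (fun k => 8 * (g k) ^+ 2)).
- apply: nearW => k.
  exact: (@per_k _ _ _ _ _ _ _ (mu1 k) (mu2 k) (h1 k) (h2 k) (pS1 k) (pS2 k) (hB k).1).
- exact: cvg_cst.
- have := cvgM (cvg_cst (8 : R)) (cvgM Hg Hg).
  rewrite mul0r mulr0.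
  by [] || (move=> H; exact: H).
Qed.
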